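(* Let $\Phi=(V,C)$ be a CNF formula in which every clause contains at least $k_1$ and at most $k_2$ variables, and every variable belongs to at most $d$ clauses. Let $s\ge k_2$. If $2^{k_1}\ge 2\mathrm{e}ds$, then $\Phi$ has a satisfying assignment, and for every $v\in V$, $$\max\left\{\Pr_{X\sim\mu}[X(v)=0],\ \Pr_{X\sim\mu}[X(v)=1]\right\}\le \frac12\exp\left(\frac1s\right),$$ where $\mu$ is the uniform distribution over all satisfying assignments of $\Phi$.
   Context: A CNF formula $\Phi=(V,C)$ has a set $V$ of Boolean variables and a set $C$ of clauses; each clause is a disjunction of literals on distinct variables (no clause contains both $x$ and $\neg x$). The number of variables of a clause $c$ is $|\mathsf{vbl}(c)|$, where $\mathsf{vbl}(c)$ is the set of variables appearing in $c$. *)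

(* Defs.v *)
From HB Require Import structures.
From mathcomp Require Import all_boot all_order all_algebra.
From mathcomp Require Import all_classical all_reals all_analysis.
Set Implicit Arguments. Unset Strict Implicit. Unset Printing Implicit Defensive.
Import Order.TTheory GRing.Theory Num.Theory.
Local Open Scope ring_scope.

(* A clause over the variable set V: for each variable, either it does not
   occur (None) or it occurs as a literal with polarity b (Some b), the literal
   being satisfied by an assignment x iff x v = b.  This encodes "literals on
   distinct variables, never both x and ~x". *)
Definition clause (V : finType) := {ffun V -> option bool}.

Definition vbl (V : finType) (c : clause V) : {set V} := [set v | c v != None].

Definition assignment (V : finType) := {ffun V -> bool}.

Definition sat_clause (V : finType) (c : clause V) (x : assignment V) : bool :=
  [exists v, c v == Some (x v)].

Definition satisfies (V : finType) (C : {set clause V}) (x : assignment V) : bool :=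
  [forall c in C, sat_clause c x].

Definition sat_assignments (V : finType) (C : {set clause V}) : {set assignment V} :=
  [set x | satisfies C x].

Definition var_degree (V : finType) (C : {set clause V}) (v : V) : nat :=
  #|[set c in C | v \in vbl c]|.

Definition mu_prob (R : realType) (V : finType) (C : {set clause V}) (v : V) (b : bool) : R :=
  (#|[set x in sat_assignments C | x v == b]|%:R / #|sat_assignments C|%:R)%R.

(* Main.v *)
Require Import Defs.
From HB Require Import structures.
From mathcomp Require Import all_boot all_order all_algebra.
From mathcomp Require Import all_classical all_reals all_analysis.
From mathcomp Require Import fintype finset.
From mathcomp Require Import ring lra.
Import Order.TTheory GRing.Theory Num.Theory.
Local Open Scope ring_scope.



Set Implicit Arguments.
Section Comb.
Variable V : finType.
Implicit Types (S T U : {set clause V}) (a c : clause V) (x : assignment V).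

Definition cnt (P : pred (assignment V)) : nat := (\sum_(x : assignment V) P x)%N.
Definition NN S := cnt (satisfies S).
Definition VV S c := cnt (fun x => satisfies S x && ~~ sat_clause c x).

Lemma satU1 c S x : satisfies (c |: S) x = sat_clause c x && satisfies S x.
Proof.
apply/forallP/andP => [H|[H1 H2] c'].
  split; first by have := H c; rewrite !inE eqxx.
  by apply/forallP => c'; apply/implyP => Hc; have := H c'; rewrite !inE Hc orbT.
apply/implyP; rewrite !inE => /orP[/eqP->//|Hc].
by move/forallP: H2 => /(_ c') /implyP; apply.
Qed.

Lemma sat_sub S T x : T \subset S -> satisfies S x -> satisfies T x.
Proof.
move=> /subsetP sub /forallP H; apply/forallP => c; apply/implyP => Hc.
by move: (H c) => /implyP; apply; apply: sub.
Qed.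

Lemma sat0 x : satisfies set0 x.
Proof. by apply/forallP => c; rewrite inE. Qed.

Lemma N_split S c : NN S = (NN (c |: S) + VV S c)%N.
Proof.
rewrite /NN /VV /cnt -big_split /=; apply: eq_bigr => x _.
by rewrite satU1; case: (satisfies S x); case: (sat_clause c x).
Qed.

Lemma VV_mono S T c : T \subset S -> (VV S c <= VV T c)%N.
Proof.
move=> sub; apply: leq_sum => x _.
case H: (satisfies S x) => //=; by rewrite (sat_sub _ sub H).
Qed.

Definition flip (w : V) x : assignment V := [ffun u => if u == w then ~~ x u else x u].

Lemma flipK w : involutive (flip w).
Proof.
move=> x; apply/ffunP => u; rewrite !ffunE; case: (u == w) => //; exact: negbK.
Qed.

Lemma sat_clause_flip w c x : w \notin vbl c -> sat_clause c (flip w x) = sat_clause c x.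
Proof.
rewrite inE negbK => /eqP cw; apply: eq_existsb => u; rewrite ffunE.
by case: (u =P w) => [->|//]; rewrite cw.
Qed.

Lemma indep S a : (forall c', c' \in S -> [disjoint vbl c' & vbl a]) ->
  (VV S a * 2 ^ #|vbl a| = NN S)%N.
Proof.
move=> disj.
pose E (W : {set V}) := cnt (fun x => satisfies S x && [forall w in W, a w != Some (x w)]).
have satf w x : w \in vbl a -> satisfies S (flip w x) = satisfies S x.
  move=> wa; rewrite /satisfies; apply: eq_forallb => c; case Hc: (c \in S) => //=.
  by rewrite sat_clause_flip // (disjointFl (disj c Hc) wa).
have step : forall (W : {set V}) w, w \in vbl a -> w \notin W -> (E (w |: W) * 2 = E W)%N.
  move=> W w wa wW.
  have Eflip : (\sum_x (satisfies S x && [forall u in W, a u != Some (x u)] && (a w == Some (x w))) =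
         E (w |: W))%N.
    rewrite /E /cnt (reindex_inj (inv_inj (flipK w))) /=; apply: eq_bigr => x _.
    rewrite satf //.
    have -> : [forall u in W, a u != Some (flip w x u)] = [forall u in W, a u != Some (x u)].
      apply: eq_forallb => u; rewrite ffunE; case: (u =P w) => [->|//]; by rewrite (negbTE wW).
    have -> : [forall u in w |: W, a u != Some (x u)] = (a w != Some (x w)) && [forall u in W, a u != Some (x u)].
      apply/forallP/andP => [H|[H1 /forallP H2] u].
        split; first by have := H w; rewrite !inE eqxx.
        by apply/forallP => u; apply/implyP => Hu; have := H u; rewrite !inE Hu orbT.
      apply/implyP; rewrite !inE => /orP[/eqP->//|Hu]; by move: (H2 u) => /implyP; apply.
    rewrite ffunE eqxx.
    move: wa; rewrite inE; case: (a w) => // b _.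
    case: (satisfies S x); case: [forall u in W, _]; by case: b; case: (x w).
  rewrite muln2 -addnn -{1}Eflip /E /cnt -big_split /=; apply: eq_bigr => x _.
  have -> : [forall u in w |: W, a u != Some (x u)] = (a w != Some (x w)) && [forall u in W, a u != Some (x u)].
    apply/forallP/andP => [H|[H1 /forallP H2] u].
      split; first by have := H w; rewrite !inE eqxx.
      by apply/forallP => u; apply/implyP => Hu; have := H u; rewrite !inE Hu orbT.
    apply/implyP; rewrite !inE => /orP[/eqP->//|Hu]; by move: (H2 u) => /implyP; apply.
  by case: (satisfies S x); case: [forall u in W, _]; case: (a w == Some (x w)).
have gen : forall n (W : {set V}), #|W| = n -> W \subset vbl a -> (E W * 2 ^ #|W| = NN S)%N.
  elim=> [|n IH] W.
    move/eqP; rewrite cards_eq0 => /eqP -> _; rewrite cards0 expn0 muln1 /E /NN /cnt.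
    apply: eq_bigr => x _; congr (nat_of_bool _).
    have -> : [forall w in set0, a w != Some (x w)] = true by apply/forallP => w; rewrite inE.
    by rewrite andbT.
  move=> cW sub.
  have [w wW] : exists w, w \in W.
    by apply/set0Pn; rewrite -cards_eq0 cW.
  have -> : W = w |: (W :\ w) by rewrite setD1K.
  rewrite cardsU1 !inE eqxx /= add1n expnS mulnA step //; last by rewrite !inE eqxx.
    apply: IH; first by move: cW; rewrite (cardsD1 w W) wW add1n => -[].
    by apply: subset_trans sub; apply: subD1set.
  by apply: (subsetP sub).
rewrite -(gen _ _ erefl (subxx _)); congr (_ * _)%N.
rewrite /VV /E /cnt; apply: eq_bigr => x _; congr (nat_of_bool (_ && _)).
rewrite /sat_clause negb_exists; apply/forallP/forallP => H u.
  by apply/implyP => _; apply: H.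
case Hu: (u \in vbl a); first by move: (H u); rewrite Hu.
by move: Hu; rewrite inE => /negbT; rewrite negbK => /eqP ->.
Qed.


Lemma card_bigcup_le (I : finType) (P : pred I) (F : I -> {set clause V}) :
  (#|\bigcup_(i | P i) F i| <= \sum_(i | P i) #|F i|)%N.
Proof.
apply: (big_ind2 (fun (A : {set clause V}) (n : nat) => #|A| <= n)%N).
- by rewrite cards0.
- move=> A1 n1 A2 n2 h1 h2; apply: leq_trans (leq_add h1 h2).
  exact: (leq_card_setU A1 A2).1.
- by [].
Qed.

Lemma S1_card (C S : {set clause V}) a d : S \subset C ->
  (forall v, (var_degree C v <= d)%N) ->
  (#|[set c in S | ~~ [disjoint vbl c & vbl a]]| <= #|vbl a| * d)%N.
Proof.
move=> SC hd.
have sub : [set c in S | ~~ [disjoint vbl c & vbl a]] \subset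
   \bigcup_(v in vbl a) [set c in C | v \in vbl c].
  apply/subsetP => c; rewrite inE => /andP[cS].
  rewrite -setI_eq0 => /set0Pn [v]; rewrite inE => /andP[vc va].
  by apply/bigcupP; exists v => //; rewrite inE vc (subsetP SC).
apply: leq_trans (subset_leq_card sub) _.
apply: leq_trans (card_bigcup_le V (fun v => v \in vbl a) (fun v => [set c in C | v \in vbl c])) _.
rewrite -sum_nat_const; apply: leq_sum => v _; exact: hd.
Qed.

End Comb.

Section LLL.
Variable R : realType.
Variable V : finType.
Variable C : {set clause V}.
Variable y : R.
Hypothesis y0 : 0 <= y.
Hypothesis y1 : y <= 1.

Definition Pgood (T : {set clause V}) := forall c, c \in C ->
  ((VV T c)%:R : R) <= (1 - y) * (NN T)%:R.

Lemma chain (T : {set clause V}) : forall n (U : {set clause V}), #|U| = n -> U \subset C ->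
  (forall U' : {set clause V}, U' \proper U -> Pgood (T :|: U')) ->
  y ^+ #|U| * (NN T)%:R <= (NN (T :|: U))%:R.
Proof.
elim=> [|n IH] U.
  by move/eqP; rewrite cards_eq0 => /eqP -> _ _; rewrite setU0 cards0 expr0 mul1r.
move=> cU UC hP.
have [w wU] : exists w, w \in U by apply/set0Pn; rewrite -cards_eq0 cU.
have Hprop : U :\ w \proper U by rewrite properD1.
have cU' : #|U :\ w| = n by move: cU; rewrite (cardsD1 w U) wU add1n => -[].
have IH' := IH (U :\ w) cU' (subset_trans (subD1set U w) UC)
   (fun U'' h => hP U'' (proper_sub_trans h (subD1set U w))).
have eU : T :|: U = w |: (T :|: U :\ w) by rewrite setUCA setD1K.
have hw := hP _ Hprop w (subsetP UC w wU).
have sp := N_split (T :|: U :\ w) w.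
have -> : #|U| = (#|U :\ w|).+1 by rewrite (cardsD1 w U) wU.
rewrite eU exprS -mulrA.
apply: le_trans (_ : y * (NN (T :|: U :\ w))%:R <= _).
  by apply: ler_wpM2l.
move: hw; rewrite sp natrD; set a := (NN _)%:R; set b := (VV _ _)%:R => hw.
have : 0 <= a by rewrite /a ler0n.
by move: hw; rewrite mulrBl mul1r mulrDr; lra.
Qed.


Lemma key (S : {set clause V}) (a : clause V) : S \subset C -> (forall T : {set clause V}, T \proper S -> Pgood T) ->
  let S1 := [set c in S | ~~ [disjoint vbl c & vbl a]] in
  ((VV S a)%:R * 2 ^+ #|vbl a| <= ((NN (S :\: S1))%:R : R)) /\
  (y ^+ #|S1| * (NN (S :\: S1))%:R <= (NN S)%:R).
Proof.
move=> SC hP S1.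
have S1S : S1 \subset S by apply/subsetP => c; rewrite inE => /andP[].
split.
  have hind := @indep _ (S :\: S1) a.
  rewrite -hind; last first.
    move=> c'; rewrite !inE negb_and => /andP[/orP[/negbTE -> //|]].
    by rewrite negbK.
  rewrite natrM natrX; apply: ler_wpM2r; first by apply: exprn_ge0.
  by rewrite ler_nat; apply: VV_mono; apply: subsetDl.
have eS : (S :\: S1) :|: S1 = S.
  apply/setP => c; rewrite !inE.
  by case: (c \in S); case: [disjoint _ & _].
rewrite -{2}eS; apply: (chain erefl (subset_trans S1S SC)).
move=> U' /properP [U'S1 [c cS1 cU']]; apply: hP; apply/properP; split.
  by rewrite subUset subsetDl (subset_trans U'S1 S1S).
exists c; first exact: (subsetP S1S).
by rewrite in_setU in_setD negb_or cU' andbT negb_and negbK cS1.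
Qed.

Variable d : nat.
Hypothesis hdeg : forall v : V, (var_degree C v <= d)%N.
Hypothesis hcond : forall c n, c \in C -> (n <= #|vbl c| * d)%N ->
  1 <= 2 ^+ #|vbl c| * (1 - y) * y ^+ n.

Lemma step (T : {set clause V}) : T \subset C -> (forall T' : {set clause V}, T' \proper T -> Pgood T') -> Pgood T.
Proof.
move=> TC hP c cC.
have [h1 h2] := key c TC hP.
move: h1 h2.
set S1 := [set _ in T | _]; set N2 := (NN _)%:R; set v := (VV _ _)%:R; set NT := (NN T)%:R.
move=> h1 h2.
have hc := @hcond c #|S1| cC (@S1_card V C T c d TC hdeg).
have v0 : 0 <= v by rewrite /v ler0n.
have Y0 : 0 <= y ^+ #|S1| by apply: exprn_ge0.
have Q0 : 0 <= 1 - y by rewrite subr_ge0.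
have QY0 : 0 <= (1 - y) * y ^+ #|S1| by apply: mulr_ge0.
apply: le_trans (_ : v * (2 ^+ #|vbl c| * (1 - y) * y ^+ #|S1|) <= _).
  by rewrite -{1}(mulr1 v); apply: ler_wpM2l.
have -> : v * (2 ^+ #|vbl c| * (1 - y) * y ^+ #|S1|) = (v * 2 ^+ #|vbl c|) * ((1 - y) * y ^+ #|S1|) by rewrite !mulrA.
apply: le_trans (_ : N2 * ((1 - y) * y ^+ #|S1|) <= _).
  by apply: (ler_wpM2r QY0).
rewrite mulrCA; apply: ler_wpM2l => //; by rewrite mulrC.
Qed.

Lemma all_good : forall n (T : {set clause V}), (#|T| <= n)%N -> T \subset C -> Pgood T.
Proof.
elim=> [|n IH] T hT TC; apply: step => // T' hT'.
  by have := proper_card hT'; rewrite ltnNge (leq_trans hT) ?leq0n.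
apply: IH; last by apply: subset_trans TC; apply: proper_sub.
by have := proper_card hT'; move=> h; rewrite -ltnS (leq_trans h).
Qed.

End LLL.

Unset Implicit Arguments.

Lemma card_cnt (V : finType) (P : pred (assignment V)) : #|[set x | P x]| = cnt P.
Proof.
rewrite /cnt -sum1_card big_mkcond /=; apply: eq_bigr => x _; rewrite inE.
by case: (P x).
Qed.

Lemma bool_aux (b c : bool) : ~~ (Some (~~ b) == Some c) -> c = b.
Proof. by case: b; case: c. Qed.
Lemma bool_aux2 (b : bool) : ~~ (Some (~~ b) == Some b).
Proof. by case: b. Qed.

Theorem corollary2p2 (R : realType) (V : finType) (C : {set clause V})
    (k1 k2 d : nat) (s : R)
    (hk1 : (0 < k1)%N)
    (hsize : forall c, c \in C -> (k1 <= #|vbl c| <= k2)%N)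
    (hdeg : forall v : V, (var_degree C v <= d)%N)
    (hs : (k2%:R : R) <= s)
    (hlll : 2 * expR 1 * d%:R * s <= 2 ^+ k1) :
  (exists x : assignment V, satisfies C x) /\
  (forall v : V,
     Num.max (mu_prob R C v false) (mu_prob R C v true)
       <= 2^-1 * expR (s^-1)).
Proof.
have s0 : 0 <= s by apply: le_trans hs; rewrite ler0n.
set u := d%:R * s.
have u0 : 0 <= u by rewrite /u mulr_ge0 ?ler0n.
set y := expR (- u^-1).
have y0 : 0 <= y by apply: expR_ge0.
have y1 : y <= 1 by rewrite /y expR_le1 oppr_le0 invr_ge0.
have hcond : forall c n, c \in C -> (n <= #|vbl c| * d)%N ->
    1 <= 2 ^+ #|vbl c| * (1 - y) * y ^+ n.
  move=> c n cC hn.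
  have /andP[hk1c hk2c] := hsize c cC.
  have [v vc] : exists v, v \in vbl c.
    by apply/set0Pn; rewrite -card_gt0 (leq_trans hk1 hk1c).
  have d1 : (1 <= d)%N.
    apply: leq_trans (hdeg v); rewrite card_gt0; apply/set0Pn; exists c.
    by rewrite inE cC vc.
  have k21 : (1 <= k2)%N by apply: leq_trans hk1 (leq_trans hk1c hk2c).
  have s1 : 1 <= s by apply: le_trans hs; rewrite ler1n.
  have d1R : 1 <= (d%:R : R) by rewrite ler1n.
  have u1 : 1 <= u by rewrite /u; nra.
  have ugt0 : 0 < u by apply: lt_le_trans u1.
  have hY : expR (-1) <= y ^+ n.
    apply: le_trans (_ : y ^+ (k2 * d) <= _); last first.
      apply: ler_wiXn2l => //; apply: leq_trans hn _; by rewrite leq_mul2r hk2c orbT.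
    rewrite /y -expRM_natl ler_expR natrM mulrN /u invfM.
    have dn0 : (d%:R : R) != 0 by rewrite pnatr_eq0 -lt0n.
    rewrite mulrA -[k2%:R * d%:R * d%:R^-1]mulrA mulfV // mulr1.
    rewrite lerN2 ler_pdivrMr ?mul1r //; by apply: lt_le_trans s1.
  have hq : 1 <= (1 - y) * (u + 1).
    have e1 : y * expR (u^-1) = 1 by rewrite /y mulrC expRxMexpNx_1.
    have e2 : 1 + u^-1 <= expR (u^-1) := expR_ge1Dx _.
    have e3 : y * (1 + u^-1) <= 1 by rewrite -[X in _ <= X]e1; apply: ler_wpM2l.
    have e4 : u * (y * (1 + u^-1)) <= u * 1 by apply: ler_wpM2l.
    have e5 : u * (y * (1 + u^-1)) = y * u + y.
      rewrite mulrCA mulrDr mulr1 mulfV; last by rewrite gt_eqF. by rewrite mulrDr mulr1.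
    lra.
  have hP : 2 * expR 1 * u <= 2 ^+ #|vbl c|.
    apply: le_trans (_ : 2 ^+ k1 <= _); first by rewrite /u mulrA.
    by apply: ler_weXn2l => //; rewrite ler1n.
  have E0 : 0 < expR (1 : R) := expR_gt0 _.
  have hEY : 1 <= expR 1 * y ^+ n.
    apply: le_trans (_ : expR 1 * expR (-1) <= _); first by rewrite expRxMexpNx_1. by apply: ler_wpM2l => //; apply: ltW.
  have Q0 : 0 <= 1 - y by rewrite subr_ge0.
  have QY0 : 0 <= (1 - y) * y ^+ n by apply: mulr_ge0 => //; apply: exprn_ge0.
  apply: le_trans (_ : 2 * expR 1 * u * (1 - y) * y ^+ n <= _); last first.
    by move: (ler_wpM2r QY0 hP); rewrite !mulrA.
  have -> : 2 * expR 1 * u * (1 - y) * y ^+ n = (2 * u * (1 - y)) * (expR 1 * y ^+ n).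
    by ring.
  apply: mulr_ege1 => //.
  have h2u : u + 1 <= 2 * u by lra.
  apply: le_trans hq _; rewrite [X in _ <= X]mulrC; by apply: (ler_wpM2l Q0).
have good : forall T : {set clause V}, T \subset C -> Pgood R C y T.
  by move=> T TC; exact: (@all_good R V C y y0 y1 d hdeg hcond #|T| T (leqnn _) TC).
have good' : forall U' : {set clause V}, U' \proper C -> Pgood R C y (set0 :|: U').
  by move=> U' h; rewrite set0U; apply: good; exact: proper_sub.
have hN : 0 < ((NN C)%:R : R).
  have := @chain R V C y y0 set0 #|C| C erefl (subxx C) good'.
  rewrite set0U; apply: lt_le_trans; apply: mulr_gt0.
    by apply: exprn_gt0; apply: expR_gt0.
  rewrite ltr0n /NN /cnt (bigD1 [ffun=> true]) //; apply: leq_trans (leq_addr _ _); by rewrite sat0.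
split.
  move: hN; rewrite ltr0n; case: (pickP (satisfies C)) => [x Hx|H]; first by exists x.
  by rewrite /NN /cnt big1 // => x _; rewrite H.
move=> v.
have hb : forall b, mu_prob R C v b <= 2^-1 * expR (s^-1).
  move=> b.
  pose a : clause V := [ffun u => if u == v then Some (~~ b) else None].
  have va : vbl a = [set v].
    apply/setP => w; rewrite !inE ffunE; by case: (w == v).
  have na : forall x, ~~ sat_clause a x = (x v == b).
    move=> x; rewrite /sat_clause negb_exists; apply/forallP/eqP => [H|Hx w].
      by move: (H v); rewrite ffunE eqxx; apply: bool_aux.
    rewrite ffunE; case: (w =P v) => [->|_] //; rewrite Hx; exact: bool_aux2.
  have eNum : #|[set x in sat_assignments C | x v == b]| = VV C a.
    rewrite /VV -card_cnt; apply: eq_card => x; rewrite !inE na //.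
  have eDen : #|sat_assignments C| = NN C.
    by rewrite /NN -card_cnt; apply: eq_card => x; rewrite !inE.
  rewrite /mu_prob eNum eDen.
  have [h1 h2] := @key R V C y y0 C a (subxx C) (fun T h => good T (proper_sub h)).
  move: h1 h2; set S1 := [set _ in C | _]; set N2 := (NN _)%:R => h1 h2.
  have cS1 : (#|S1| <= d)%N.
    apply: leq_trans (@S1_card V C C a d (subxx C) hdeg) _; by rewrite va cards1 mul1n.
  have hy : expR (- s^-1) <= y ^+ #|S1|.
    apply: le_trans (_ : y ^+ d <= _); last by apply: ler_wiXn2l.
    rewrite /y -expRM_natl ler_expR mulrN lerN2 /u.
    have [->|dn0] := eqVneq d 0%N; first by rewrite mul0r invr_ge0.
    rewrite invfM mulrA mulfV ?mul1r // pnatr_eq0 //.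
  move: h1; rewrite va cards1 expr1 => h1.
  have eE : expR (s^-1) * expR (- s^-1) = 1 := expRxMexpNx_1 _.
  have N20 : 0 <= N2 by rewrite /N2 ler0n.
  have h3 : N2 <= expR (s^-1) * (NN C)%:R.
    apply: le_trans (_ : expR (s^-1) * (y ^+ #|S1| * N2) <= _); last first.
      by apply: ler_wpM2l => //; apply: expR_ge0.
    rewrite mulrA; rewrite -{1}(mul1r N2); apply: ler_wpM2r => //.
    by rewrite -eE; apply: ler_wpM2l => //; apply: expR_ge0.
  rewrite ler_pdivrMr //; lra.
by rewrite ge_max !hb.
Qed.
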